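(* Let $S$ be a finite set, $n\ge 2$, and $R_1,\dots,R_n$ finite sets of words on $S\cup S^{-1}$; let $\tilde R=[R_n^{S_0},[R_{n-1}^{S_0},\dots[R_2^{S_0},R_1]\dots]]$. Let $\varphi:F(S)\to\mathbb F$ be a homomorphism to a non-abelian free group $\mathbb F$ with non-abelian image. Then $\varphi$ is trivial on every element of $\tilde R$ if and only if there is some $i$ such that $\varphi$ is trivial on every element of $R_i$.
   Context: $F(S)$ is the free group on $S$. $S_0=S\cup\{1\}$; for sets $R,R'$ of words on $S\cup S^{-1}$, $R^{S_0}$ is the set of words obtained by conjugating elements of $R$ by elements of $S_0$, and $[R^{S_0},R']$ is the set of commutators $[u,v]$ with $u\in R^{S_0}$, $v\in R'$. *)

(* Defs.v *)
(* A word on S ∪ S^{-1} is a seq of letters (s, b) with b = true meaning s^{-1}.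
   The free group F(S) is the set of freely reduced words; [reduce w] is the
   free-reduction normal form, so w = 1 in F(S) iff reduce w = [::]. *)
From mathcomp Require Import all_boot.
Set Implicit Arguments. Unset Strict Implicit. Unset Printing Implicit Defensive.

Definition word (S : Type) := seq (S * bool).

Definition inv_letter (S : Type) (l : S * bool) : S * bool := (l.1, ~~ l.2).

Definition inv_word (S : Type) (w : word S) : word S := rev (map (@inv_letter S) w).

Definition reduce (S : eqType) (w : word S) : word S :=
  foldr (fun l acc => match acc with
                      | l' :: acc' => if l' == inv_letter l then acc' else l :: acc
                      | [::] => [:: l]
                      end) [::] w.

(* The homomorphism F(S) -> F(T) determined by the images f s of the generators. *)
Definition subst (S T : Type) (f : S -> word T) (w : word S) : word T :=
  flatten (map (fun l => if l.2 then inv_word (f l.1) else f l.1) w).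

Definition kills (S : Type) (T : eqType) (f : S -> word T) (w : word S) : Prop :=
  reduce (subst f w) = [::].

Definition nonabelian_image (S : Type) (T : eqType) (f : S -> word T) : Prop :=
  exists u v : word S, reduce (subst f (u ++ v)) <> reduce (subst f (v ++ u)).

Definition conjw (S : Type) (s : S) (r : word S) : word S :=
  (s, true) :: r ++ [:: (s, false)].

Definition commw (S : Type) (u v : word S) : word S :=
  inv_word u ++ inv_word v ++ u ++ v.

(* R^{S_0}: conjugates of elements of R by elements of S ∪ {1} *)
Definition conjS0 (S : finType) (R : seq (word S)) : seq (word S) :=
  R ++ [seq conjw s r | s <- enum S, r <- R].

Definition commset (S : finType) (R R' : seq (word S)) : seq (word S) :=
  [seq commw u v | u <- conjS0 R, v <- R'].

Fixpoint Rtilde (S : finType) (R : nat -> seq (word S)) (k : nat) : seq (word S) :=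
  match k with
  | 0 => R 1
  | 1 => R 1
  | k'.+1 => commset (R k) (Rtilde R k')
  end.

(* Main.v *)
Require Import Defs.
From mathcomp Require Import all_boot.
From Stdlib Require Import Lia PeanoNat Classical.
Set Implicit Arguments. Unset Strict Implicit. Unset Printing Implicit Defensive.

Definition step {T : eqType} (l : T * bool) (acc : word T) : word T :=
  match acc with
  | l' :: acc' => if l' == inv_letter l then acc' else l :: acc
  | [::] => [:: l]
  end.

Lemma reduceE {T : eqType} (w : word T) : reduce w = foldr step [::] w.
Proof. by []. Qed.

Fixpoint red {T : eqType} (w : word T) : bool :=
  match w with
  | [::] => true
  | l :: w' => red w' && (match w' with l' :: _ => l' != inv_letter l | [::] => true end)
  end.

Lemma inv_letterK {T : Type} (l : T * bool) : inv_letter (inv_letter l) = l.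
Proof. by case: l => a b; rewrite /inv_letter /= negbK. Qed.

Lemma inv_letter_neq {T : eqType} (l : T * bool) : (inv_letter l == l) = false.
Proof. case: l => a b; rewrite /inv_letter /=; apply/eqP => [[]]; by case: b. Qed.

Lemma inv_letter_inj {T : Type} : injective (@inv_letter T).
Proof. by move=> x y H; rewrite -(inv_letterK x) H inv_letterK. Qed.

Lemma inv_word_cat {T : Type} (u v : word T) : inv_word (u ++ v) = inv_word v ++ inv_word u.
Proof. by rewrite /inv_word map_cat rev_cat. Qed.

Lemma inv_wordK {T : Type} (u : word T) : inv_word (inv_word u) = u.
Proof.
rewrite /inv_word map_rev revK -map_comp.
by rewrite -[RHS]map_id; apply: eq_map => x; rewrite /= inv_letterK.
Qed.

Lemma inv_word_cons {T : Type} (l : T * bool) (u : word T) :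
  inv_word (l :: u) = inv_word u ++ [:: inv_letter l].
Proof. by rewrite /inv_word /= rev_cons cats1. Qed.

Lemma size_inv_word {T : Type} (u : word T) : size (inv_word u) = size u.
Proof. by rewrite /inv_word size_rev size_map. Qed.

Lemma catIl {A : Type} (u a b : seq A) : u ++ a = u ++ b -> a = b.
Proof. by elim: u => //= x u IH [] /IH. Qed.

Lemma red_step {T : eqType} (l : T * bool) z : red z -> red (step l z).
Proof.
case: z => [|a z] //= /andP[Hz Ha].
case: ifP => Hal //=; by rewrite Hz Ha Hal.
Qed.

Lemma red_reduce {T : eqType} (w : word T) : red (reduce w).
Proof. elim: w => //= l w IH; exact: red_step. Qed.

Lemma step_step {T : eqType} (l : T * bool) z :
  red z -> step l (step (inv_letter l) z) = z.
Proof.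
case: z => [|a z] /=; first by rewrite eqxx.
move=> /andP[Hz Ha].
case: ifP => [/eqP Ha'|Ha'].
  move: Ha'; rewrite /= ?inv_letterK => Ha'; subst a.
  case: z Hz Ha => [|b z] //= _ Hb. by rewrite (negbTE Hb).
by rewrite /= eqxx.
Qed.

Definition F {T : eqType} (w acc : word T) := foldr step acc w.

Lemma red_F {T : eqType} (w acc : word T) : red acc -> red (F w acc).
Proof. move=> H; elim: w => //= l w IH; exact: red_step. Qed.

Lemma F_step {T : eqType} (l : T * bool) (w acc : word T) :
  red acc -> red w -> F (step l w) acc = step l (F w acc).
Proof.
move=> Hacc; case: w => [|a w] //= Hw.
case: ifP => [/eqP Ha|] //.
subst a; rewrite step_step //; exact: red_F.
Qed.

Lemma F_reduce {T : eqType} (u acc : word T) : red acc -> F u acc = F (reduce u) acc.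
Proof.
move=> Hacc; elim: u => //= l u IH.
by rewrite IH -F_step // red_reduce.
Qed.

Lemma reduce_cat {T : eqType} (u v : word T) : reduce (u ++ v) = F u (reduce v).
Proof. by rewrite reduceE foldr_cat. Qed.

Lemma reduce_red {T : eqType} (w : word T) : red w -> reduce w = w.
Proof.
elim: w => //= l w IH /andP[Hw Hl]; rewrite IH //.
case: w {IH Hw} Hl => //= a w H; by rewrite (negbTE H).
Qed.

Lemma reduce_reduce {T : eqType} (w : word T) : reduce (reduce w) = reduce w.
Proof. exact/reduce_red/red_reduce. Qed.

Lemma reduce_catl {T : eqType} (u v : word T) : reduce (u ++ v) = reduce (reduce u ++ v).
Proof. by rewrite !reduce_cat [LHS]F_reduce // red_reduce. Qed.

Lemma reduce_catr {T : eqType} (u v : word T) : reduce (u ++ v) = reduce (u ++ reduce v).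
Proof. by rewrite !reduce_cat reduce_reduce. Qed.

Lemma eqw_ctx {T : eqType} (x u u' y : word T) :
  reduce u = reduce u' -> reduce (x ++ u ++ y) = reduce (x ++ u' ++ y).
Proof.
move=> H; rewrite reduce_catr [in RHS]reduce_catr; congr reduce; congr (_ ++ _).
by rewrite reduce_catl H -reduce_catl.
Qed.

Lemma cancel_r {T : eqType} (u : word T) : reduce (u ++ inv_word u) = [::].
Proof.
elim: u => //= l u IH.
rewrite inv_word_cons catA reduce_cat F_reduce //= ?IH //=.
by rewrite ?inv_letterK eqxx.
Qed.

Lemma cancel_l {T : eqType} (u : word T) : reduce (inv_word u ++ u) = [::].
Proof. by rewrite -{2}(inv_wordK u) cancel_r. Qed.

Lemma cancel_mid {T : eqType} (x u y : word T) :
  reduce (x ++ u ++ inv_word u ++ y) = reduce (x ++ y).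
Proof. by rewrite (catA u) (@eqw_ctx _ x _ [::] y (cancel_r u)). Qed.

Lemma cancel_mid' {T : eqType} (x u y : word T) :
  reduce (x ++ inv_word u ++ u ++ y) = reduce (x ++ y).
Proof. by rewrite -{2}(inv_wordK u) cancel_mid. Qed.

Lemma eqw_catl {T : eqType} (u u' y : word T) :
  reduce u = reduce u' -> reduce (u ++ y) = reduce (u' ++ y).
Proof. by move=> H; rewrite (@eqw_ctx _ [::] u u' y H). Qed.

Lemma eqw_catr {T : eqType} (x v v' : word T) :
  reduce v = reduce v' -> reduce (x ++ v) = reduce (x ++ v').
Proof. by move=> H; rewrite -(cats0 v) -(cats0 v') (@eqw_ctx _ x v v' [::] H). Qed.

Lemma eqw_inv {T : eqType} (u v : word T) :
  reduce u = reduce v -> reduce (inv_word u) = reduce (inv_word v).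
Proof.
move=> H.
rewrite -[inv_word u]cats0 -(@cancel_mid _ (inv_word u) v [::]).
rewrite (@eqw_ctx _ (inv_word u) v u _ (esym H)).
by rewrite -[X in reduce X = _]cat0s cancel_mid' cats0.
Qed.

Definition comm {T : eqType} (x y : word T) := reduce (x ++ y) = reduce (y ++ x).

Lemma comm_sym {T : eqType} (x y : word T) : comm x y -> comm y x.
Proof. by []. Qed.

Lemma comm_eql {T : eqType} (x x' y : word T) : reduce x = reduce x' -> comm x y -> comm x' y.
Proof.
by move=> H; rewrite /comm -(eqw_catl y H) -(eqw_catr y H).
Qed.

Lemma comm_eqr {T : eqType} (x y y' : word T) : reduce y = reduce y' -> comm x y -> comm x y'.
Proof. by move=> H /comm_sym C; apply/comm_sym/(comm_eql H). Qed.

Lemma comm_nil {T : eqType} (x : word T) : comm x [::].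
Proof. by rewrite /comm cats0. Qed.

Lemma comm_refl {T : eqType} (x : word T) : comm x x.
Proof. by []. Qed.

Lemma comm_cat {T : eqType} (x y z : word T) : comm x y -> comm x z -> comm x (y ++ z).
Proof.
move=> H1 H2; rewrite /comm catA (eqw_catl z H1) -catA (eqw_catr y H2) catA //.
Qed.

Lemma comm_inv {T : eqType} (x y : word T) : comm x y -> comm x (inv_word y).
Proof.
move=> H; rewrite /comm.
have E1 := @cancel_mid' _ [::] y (x ++ inv_word y); rewrite /= in E1.
rewrite -E1 (catA y x) (@eqw_ctx _ (inv_word y) (y ++ x) (x ++ y) (inv_word y) (esym H)).
have E2 := @cancel_mid _ (inv_word y ++ x) y [::]; rewrite cats0 -!catA in E2.
by rewrite -catA E2 cats0.
Qed.

Lemma conj_mul {T : eqType} (p x y : word T) :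
  reduce ((inv_word p ++ x ++ p) ++ (inv_word p ++ y ++ p)) = reduce (inv_word p ++ (x ++ y) ++ p).
Proof.
have := @cancel_mid _ (inv_word p ++ x) p (y ++ p).
by rewrite -!catA => ->.
Qed.

Lemma comm_conj {T : eqType} (p x y : word T) :
  comm x y -> comm (inv_word p ++ x ++ p) (inv_word p ++ y ++ p).
Proof.
by move=> H; rewrite /comm !conj_mul (@eqw_ctx _ (inv_word p) (x ++ y) (y ++ x) p H).
Qed.

Lemma red_catl {T : eqType} (u v : word T) : red (u ++ v) -> red u.
Proof.
elim: u => //= l u IH /andP[H1 H2]; rewrite IH //.
by case: u {IH H1} H2.
Qed.

Lemma red_catr {T : eqType} (u v : word T) : red (u ++ v) -> red v.
Proof. elim: u => //= l u IH /andP[H1 _]; exact: IH. Qed.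

Lemma red_mid {T : eqType} (x z y : word T) : red (x ++ z ++ y) -> red z.
Proof. by move/red_catr/red_catl. Qed.

Lemma red_join {T : eqType} (x z y : word T) :
  z != [::] -> red (x ++ z) -> red (z ++ y) -> red (x ++ z ++ y).
Proof.
move=> Hz; elim: x => //= l x IH /andP[H1 H2] H3; rewrite IH //=.
by case: x {IH H1 H3} H2 => [|a x] //; case: z Hz.
Qed.

Lemma red_pair {T : eqType} (x y : word T) l : red (x ++ l :: inv_letter l :: y) = false.
Proof.
apply/negP => /(@red_mid _ x [:: l; inv_letter l] y) /=.
by rewrite eqxx.
Qed.

Lemma not_red {T : eqType} (w : word T) :
  red w = false -> exists x y l, w = x ++ l :: inv_letter l :: y.
Proof.
elim: w => //= l w IH; case Hw: (red w) => /=.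
  case: w Hw {IH} => // a w _ /negbFE/eqP ->.
  by exists [::], w, l.
move=> _; case: (IH Hw) => x [y [l' ->]].
by exists (l :: x), y, l'.
Qed.

Lemma red_inv {T : eqType} (w : word T) : red (inv_word w) = red w.
Proof.
suff H: forall w : word T, red w -> red (inv_word w).
  apply/idP/idP; last exact: H.
  by move/H; rewrite inv_wordK.
move=> {}w Hw; apply/negPn/negP => /negbTE/not_red [x [y [l E]]].
move: Hw; rewrite -(inv_wordK w) E !inv_word_cat !inv_word_cons /=.
rewrite -!catA /= inv_letterK.
by rewrite red_pair.
Qed.

Lemma size_step {T : eqType} (l : T * bool) z : size (step l z) <= (size z).+1.
Proof. case: z => //= a z; case: ifP => //= _; exact: leqW. Qed.

Lemma size_reduce {T : eqType} (w : word T) : size (reduce w) <= size w.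
Proof.
elim: w => //= l w IH; apply: leq_trans (size_step l _) _; by rewrite ltnS.
Qed.

Ltac ssrlia :=
  repeat match goal with
  | H : is_true (leq _ _) |- _ => apply (elimT leP) in H
  end;
  try apply (introT leP); unfold addn, subn, muln in *; lia.

Lemma canc {T : eqType} (u v : word T) : red u -> red v ->
  exists u1 t v1, [/\ u = u1 ++ t, v = inv_word t ++ v1 & reduce (u ++ v) = u1 ++ v1].
Proof.
elim: u => [|l u IH] Hu Hv.
  by exists [::], [::], v; rewrite reduce_red.
move: Hu => /= /andP[Hu Hl].
have [u1 [t [v1 [Eu Ev Er]]]] := IH Hu Hv.
rewrite ?cat_cons.
rewrite Er.
case: u1 Eu Er => [|a u1] Eu Er.
  rewrite /= in Eu; subst u.
  case: v1 Ev Er => [|a v1] Ev Er.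
    by exists [:: l], t, [::].
  rewrite /=; case: ifP => [/eqP Ha|Ha].
    exists [::], (l :: t), v1; split => //.
    by rewrite Ev inv_word_cons -catA Ha.
  by exists [:: l], t, (a :: v1).
subst u; rewrite /= in Hl *; rewrite (negbTE Hl).
by exists [:: l, a & u1], t, v1.
Qed.

Lemma dec {T : eqType} (a : word T) : red a -> a != [::] ->
  exists p c, [/\ a = p ++ c ++ inv_word p, c != [::] & red (c ++ c)].
Proof.
move: {2}(size a) (leqnn (size a)) => n.
elim: n a => [|n IH] a Hsz Hr Hne.
  by case: a Hsz Hr Hne.
case: a Hsz Hr Hne => [|y a1] // Hsz Hr _.
case/lastP: a1 Hsz Hr => [|m x] Hsz Hr.
  exists [::], [:: y]; split => //=; by rewrite eq_sym inv_letter_neq.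
case Exy: (x == inv_letter y).
  move/eqP: Exy => Exy; subst x.
  case: m Hsz Hr => [|b m] Hsz Hr.
    by move: Hr; rewrite /= eqxx ?andbF.
  have Hm : red (b :: m).
    by move: Hr; rewrite -cats1 -!cat_cons => /red_catl /andP[].
  have Hsm : size (b :: m) <= n.
    by move: Hsz; rewrite /= size_rcons ltnS => /ltnW.
  have [p [c [Ep Hc Hcc]]] := IH _ Hsm Hm erefl.
  exists (y :: p), c; split => //.
  by rewrite inv_word_cons -cats1 Ep /= !catA.
exists [::], (y :: rcons m x); split => //; first by rewrite cats0.
have Hr' : red ((y :: m) ++ [:: x]) by rewrite cat_cons cats1.
rewrite -cats1 -cat_cons -catA.
apply: red_join => //.
move: Hr'; rewrite /= => ->; rewrite /=.
apply/negP => /eqP Hy; move: Exy; by rewrite Hy inv_letterK eqxx.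
Qed.

Definition pw {T : Type} (z : word T) n : word T := flatten (nseq n z).

Lemma pwS {T : Type} (z : word T) n : pw z n.+1 = z ++ pw z n.
Proof. by []. Qed.

Lemma pw0 {T : Type} (z : word T) : pw z 0 = [::].
Proof. by []. Qed.

Lemma pw1 {T : Type} (z : word T) : pw z 1 = z.
Proof. by rewrite pwS cats0. Qed.

Lemma pw_add {T : Type} (z : word T) m n : pw z (m + n) = pw z m ++ pw z n.
Proof. elim: m => //= m IH; by rewrite addSn !pwS IH catA. Qed.

Lemma pwSr {T : Type} (z : word T) n : pw z n.+1 = pw z n ++ z.
Proof. by rewrite -addn1 pw_add pw1. Qed.

Lemma pw_mul {T : Type} (z : word T) j N : pw (pw z j) N = pw z (j * N).
Proof. elim: N => [|N IH]; first by rewrite muln0. by rewrite pwS IH mulnS pw_add. Qed.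

Lemma size_pw {T : Type} (z : word T) n : size (pw z n) = n * size z.
Proof. elim: n => //= n IH; by rewrite pwS size_cat IH mulSn. Qed.

Lemma inv_pw {T : Type} (z : word T) n : inv_word (pw z n) = pw (inv_word z) n.
Proof. elim: n => //= n IH; by rewrite pwS inv_word_cat IH pwSr. Qed.

Lemma pw_nil {T : Type} n : pw ([::] : word T) n = [::].
Proof. by elim: n. Qed.

Lemma red_pw {T : eqType} (z : word T) n : red (z ++ z) -> red (pw z n).
Proof.
move=> Hzz; case: z Hzz => [|a z] Hzz; first by rewrite pw_nil.
elim: n => [|n IH] //; case: n IH => [|n] IH.
  by rewrite pw1; exact: red_catl Hzz.
rewrite pwS pwS; apply: red_join => //.
Qed.

Lemma pw_eq {T : eqType} (u v : word T) n : reduce u = reduce v -> reduce (pw u n) = reduce (pw v n).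
Proof.
move=> H; elim: n => //= n IH; rewrite !pwS (eqw_catl _ H); exact: eqw_catr.
Qed.

Lemma comm_pw {T : eqType} (x y : word T) n : comm x y -> comm x (pw y n).
Proof. move=> H; elim: n => [|n IH]; first exact: comm_nil. rewrite pwS; exact: comm_cat. Qed.

Lemma pw_cancel {T : eqType} (z : word T) m j :
  reduce (pw (inv_word z) m ++ pw z j) = reduce (pw (inv_word z) (m - j) ++ pw z (j - m)).
Proof.
elim: m j => [|m IH] j; first by rewrite sub0n subn0.
case: j => [|j]; first by rewrite !cats0.
rewrite !subSS -IH pwSr pwS -catA.
exact: cancel_mid'.
Qed.

Lemma prefix_of {A : eqType} (u v w w' : seq A) :
  u ++ w = v ++ w' -> size u <= size v -> exists v', v = u ++ v'.
Proof.
elim: u v => [|a u IH] v E H; first by exists v.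
case: v E H => [|b v] //= [-> E] H.
have [v' ->] := IH _ E H. by exists v'.
Qed.

Lemma LS {T : eqType} (u v : word T) :
  u ++ v = v ++ u -> exists z i j, u = pw z i /\ v = pw z j.
Proof.
move: {2}(size u + size v) (leqnn (size u + size v)) => n.
elim: n u v => [|n IH] u v Hsz E.
  case: u v Hsz E => [|? ?] [|? ?] //= _ _; by exists [::], 0, 0.
case: u Hsz E => [|a u] Hsz E.
  by exists v, 0, 1; rewrite pw1.
case: v Hsz E => [|b v] Hsz E.
  by exists (a :: u), 1, 0; rewrite pw1.
set U := a :: u in Hsz E *; set V := b :: v in Hsz E *.
case: (leqP (size U) (size V)) => H.
  have [v' Ev] := prefix_of E H.
  rewrite Ev -catA in E; have E' := catIl E.
  have Hs : size U + size v' <= n.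
    move: Hsz; rewrite Ev size_cat /U /= => Hsz; ssrlia.
  have [z [i [j [E1 E2]]]] := IH _ _ Hs E'.
  by exists z, i, (i + j); rewrite Ev pw_add -E1 -E2.
have [u' Eu] := prefix_of (esym E) (ltnW H).
rewrite Eu -catA in E; have E' := catIl E.
have Hs : size u' + size V <= n.
  move: Hsz; rewrite Eu size_cat /V /= => Hsz; ssrlia.
have [z [i [j [E1 E2]]]] := IH _ _ Hs E'.
by exists z, (j + i), j; rewrite Eu pw_add -E1 -E2.
Qed.

Lemma nth_pw {T : Type} (x0 : T * bool) (z : word T) n i :
  i < n * size z -> nth x0 (pw z n) i = nth x0 z (i %% size z).
Proof.
elim: n i => [|n IH] i //; rewrite mulSn pwS nth_cat => Hi.
case: ifP => Hiz; first by rewrite modn_small.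
have Hle : size z <= i by rewrite leqNgt Hiz.
rewrite IH; last by ssrlia.
by rewrite -{2}(subnK Hle) modnDr.
Qed.

Lemma period {T : eqType} (z w : word T) m n :
  0 < m -> 0 < n -> pw z m = pw w n -> z ++ w = w ++ z.
Proof.
move=> Hm Hn E.
case: z E => [|a z'] E; first by rewrite cats0.
case: w E => [|b w'] E; first by rewrite cats0.
set z := a :: z' in E *; set w := b :: w' in E *.
have Hz : 0 < size z by [].
have Hw : 0 < size w by [].
have Hs : m * size z = n * size w by rewrite -!size_pw E.
pose s i := nth a z (i %% size z).
have P : forall i, s i = nth a w (i %% size w).
  move=> i; set L := m * size z.
  have HL : 0 < L by rewrite muln_gt0 Hm.
  have Hi : i %% L < m * size z by rewrite ltn_pmod.
  rewrite /s -(modn_dvdm i (dvdn_mull m (dvdnn (size z)))) -/L.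
  rewrite -(nth_pw a Hi) E nth_pw; last by rewrite -Hs.
  by rewrite /L Hs modn_dvdm // dvdn_mull.
have Ps : forall i, s (i + size z) = s i by move=> i; rewrite /s modnDr.
have Pw : forall i, s (i + size w) = s i by move=> i; rewrite !P modnDr.
have Ez : forall i, i < size z -> nth a z i = s i by move=> i Hi; rewrite /s modn_small.
have Ew : forall i, i < size w -> nth a w i = s i by move=> i Hi; rewrite P modn_small.
apply: (@eq_from_nth _ a); first by rewrite !size_cat addnC.
move=> i; rewrite size_cat => Hi.
have -> : nth a (z ++ w) i = s i.
  rewrite nth_cat; case: ifP => H1; first by rewrite Ez.
  have H2 : size z <= i by rewrite leqNgt H1.
  by rewrite Ew ?(ltn_subLR _ H2) // -Ps subnK.
rewrite nth_cat; case: ifP => H1; first by rewrite Ew.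
have H2 : size w <= i by rewrite leqNgt H1.
by rewrite Ez; [rewrite -[s (i - size w)]Pw subnK | ssrlia].
Qed.

Lemma inv_word_rcons {T : Type} (t : word T) l :
  inv_word (rcons t l) = inv_letter l :: inv_word t.
Proof. by rewrite -cats1 inv_word_cat. Qed.

Lemma size0P {A : Type} (s : seq A) : size s = 0 -> s = [::].
Proof. by case: s. Qed.

Lemma Kthm {T : eqType} (c b : word T) : c != [::] -> red (c ++ c) -> red b -> comm c b ->
  exists z m j, [/\ 0 < m, c = pw z m &
    (reduce b = reduce (pw z j) \/ reduce b = reduce (pw (inv_word z) j))].
Proof.
move=> Hc Hcc.
have Hcr : red c := red_catl Hcc.
move: {2}(size b) (leqnn (size b)) => N.
elim: N b => [|N IH] b Hsz Hb Hcomm.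
  case: b Hsz Hb Hcomm => // _ _ _.
  by exists c, 1, 0; split => //; [rewrite pw1 | left].
have [c1 [t [b1 [Ec Eb Er1]]]] := canc Hcr Hb.
have [b2 [s [c2 [Eb' Ec' Er2]]]] := canc Hb Hcr.
have Eq : c1 ++ b1 = b2 ++ c2 by rewrite -Er1 -Er2.
have S1 := congr1 size Ec; have S2 := congr1 size Eb;
have S3 := congr1 size Eb'; have S4 := congr1 size Ec'; have S5 := congr1 size Eq.
rewrite ?size_cat ?size_inv_word in S1 S2 S3 S4 S5.
have Hst : size s = size t by ssrlia.
case: (eqVneq c1 [::]) => Hc1.
  subst c1; rewrite /= in Ec; subst t.
  have Hb1 : red b1 by move: Hb; rewrite Eb => /red_catr.
  have Hs1 : size b1 <= N.
    have : 0 < size c by case: (c) Hc.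
    move=> H0; ssrlia.
  have Hb1e : reduce b1 = reduce (c ++ b).
    by rewrite Eb -[c ++ _]cat0s cancel_mid.
  have Hcb1 : comm c b1.
    rewrite /comm (eqw_catr c Hb1e) (eqw_catl c Hb1e) -catA.
    exact: eqw_catr Hcomm.
  have [z [m [j [Hm Ecz Hj]]]] := IH b1 Hs1 Hb1 Hcb1.
  exists z, m.
  have Ebz : reduce b = reduce (pw (inv_word z) m ++ b1) by rewrite Eb Ecz inv_pw.
  case: Hj => Hj.
    rewrite (eqw_catr _ Hj) pw_cancel in Ebz.
    case: (leqP m j) => Hmj.
      exists (j - m); split => //; left.
      by rewrite Ebz (eqP Hmj).
    exists (m - j); split => //; right.
    by rewrite Ebz (eqP (ltnW Hmj)) cats0.
  exists (m + j); split => //; right.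
  by rewrite Ebz (eqw_catr _ Hj) pw_add.
case: (eqVneq t [::]) => Ht.
  subst t; rewrite /= in Eb Ec Hst; rewrite cats0 in Ec; subst c1 b1.
  have Hs0 := size0P Hst; subst s; rewrite cats0 in Eb'; rewrite /= in Ec'.
  subst b2 c2.
  have [z [i [j [E1 E2]]]] := LS Eq.
  exists z, i, j; split => //; last by left; rewrite E2.
  by case: i E1 => // E1; move: Hc; rewrite E1.
case: (eqVneq b1 [::]) => Hb1.
  subst b1; rewrite cats0 in Eb.
  have S2' : size b = size t by rewrite Eb size_inv_word.
  have Hb2 : size b2 = 0 by ssrlia.
  have Hb20 := size0P Hb2; subst b2; rewrite /= in Eb'.
  rewrite -Eb' Eb inv_wordK in Ec'.
  rewrite cats0 /= in Eq; subst c2.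
  have E : c1 ++ t = t ++ c1 by rewrite -Ec -Ec'.
  have [z [i [j [E1 E2]]]] := LS E.
  exists z, (i + j), j; split.
  - by case: i j E1 E2 Ht Hc1 => [|i] [|j] //= ->.
  - by rewrite Ec pw_add E1 E2.
  - by right; rewrite Eb E2 inv_pw.
exfalso.
have Hb1s : 0 < size b1 by case: (b1) Hb1.
have Hb2 : 0 < size b2 by ssrlia.
case/lastP: t Ht Ec Eb {S1 S2 S4 S5 Hst} => [|t' l] // _ Ec Eb.
rewrite inv_word_rcons in Eb.
case: b2 Hb2 Eb' Eq Er2 S3 => [|x b2] // _ Eb' Eq _ _.
case: c1 Hc1 Ec Eq Er1 Hb1s => [|a c1] // _ Ec Eq _ _.
have Hx : x = inv_letter l by move: Eb'; rewrite Eb => -[].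
have Ha : a = inv_letter l by move: Eq => /= -[-> _].
move: Hcc; rewrite Ec -cats1 Ha.
have := red_pair (inv_letter l :: c1 ++ t') (c1 ++ t' ++ [:: l]) l.
by rewrite -!catA /= -!catA /= => ->.
Qed.

Lemma conj_red {T : eqType} (p x : word T) :
  reduce (inv_word p ++ (p ++ x ++ inv_word p) ++ p) = reduce x.
Proof.
rewrite -!catA.
have := @cancel_mid' _ [::] p (x ++ inv_word p ++ p); rewrite /= => ->.
have := @cancel_mid' _ x p [::]; rewrite !cats0 => ->.
by [].
Qed.

Lemma conj_red' {T : eqType} (p x : word T) :
  reduce (p ++ (inv_word p ++ x ++ p) ++ inv_word p) = reduce x.
Proof. by have := conj_red (inv_word p) x; rewrite inv_wordK. Qed.

Lemma unconj_comm {T : eqType} (p x y : word T) :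
  comm (inv_word p ++ x ++ p) (inv_word p ++ y ++ p) -> comm x y.
Proof.
move=> H; have := comm_conj (inv_word p) H; rewrite inv_wordK.
by move/(comm_eql (conj_red' p x))/(comm_eqr (conj_red' p y)).
Qed.

Lemma comm_pw2 {T : eqType} (x y : word T) j l : comm x y -> comm (pw x j) (pw y l).
Proof. by move=> H; apply/comm_pw/comm_sym/comm_pw/comm_sym. Qed.

Lemma CT {T : eqType} (a b d : word T) : reduce a != [::] -> comm a b -> comm a d -> comm b d.
Proof.
move=> Ha Hab Had.
have [p [c [Ea Hc Hcc]]] := dec (red_reduce a) Ha.
have HCa : reduce (inv_word p ++ a ++ p) = reduce c.
  rewrite (eqw_ctx _ _ (esym (reduce_reduce a))) Ea.
  exact: conj_red.
have Hcb := comm_eql HCa (comm_conj p Hab).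
have Hcd := comm_eql HCa (comm_conj p Had).
have Hcb' := comm_eqr (esym (reduce_reduce _)) Hcb.
have Hcd' := comm_eqr (esym (reduce_reduce _)) Hcd.
have [z [m [j [Hm Ecz Hj]]]] := Kthm Hc Hcc (red_reduce _) Hcb'.
have [w [n [l [Hn Ecw Hl]]]] := Kthm Hc Hcc (red_reduce _) Hcd'.
rewrite !reduce_reduce in Hj Hl.
have Hzw : comm z w by rewrite /comm (period Hm Hn (etrans (esym Ecz) Ecw)).
apply: (unconj_comm (p := p)).
have H4 : forall Z W, comm Z W ->
    reduce (inv_word p ++ b ++ p) = reduce (pw Z j) ->
    reduce (inv_word p ++ d ++ p) = reduce (pw W l) ->
    comm (inv_word p ++ b ++ p) (inv_word p ++ d ++ p).
  move=> Z W HZW E1 E2.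
  exact: (comm_eql (esym E1) (comm_eqr (esym E2) (comm_pw2 j l HZW))).
have Hzw' : comm z (inv_word w) by apply: comm_inv.
have Hzw'' : comm (inv_word z) w by apply/comm_sym/comm_inv/comm_sym.
have Hzw''' : comm (inv_word z) (inv_word w) by apply/comm_inv.
by case: Hj => Hj; case: Hl => Hl; apply: (H4 _ _ _ Hj Hl).
Qed.

Lemma comm_not_inv {T : eqType} (c : word T) :
  c != [::] -> red (c ++ c) -> reduce c = reduce (inv_word c) -> False.
Proof.
move=> Hc Hcc H.
have := eqw_catr c H; rewrite cancel_r reduce_red //.
by case: (c) Hc.
Qed.

Lemma torsion {T : eqType} (g : word T) : reduce (g ++ g) = [::] -> reduce g = [::].
Proof.
move=> H; apply/eqP; apply/negPn/negP => Hg.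
have [p [d [Ed Hd Hdd]]] := dec (red_reduce g) Hg.
have H1 : reduce (p ++ (d ++ d) ++ inv_word p) = [::].
  have := conj_mul (inv_word p) d d; rewrite inv_wordK => <-.
  by rewrite -Ed -reduce_catl -reduce_catr.
have := conj_red p (d ++ d).
rewrite (@eqw_ctx _ (inv_word p) _ [::] p H1) cancel_l reduce_red //.
by case: (d) Hd.
Qed.

Lemma LL {T : eqType} (u w v : word T) :
  size (reduce w) <= size (reduce (u ++ w ++ v)) + size u + size v.
Proof.
have E : reduce w = reduce (inv_word u ++ (u ++ w ++ v) ++ inv_word v).
  rewrite -!catA.
  have := @cancel_mid' _ [::] u (w ++ v ++ inv_word v); rewrite /= => ->.
  by have := @cancel_mid _ w v [::]; rewrite !cats0 => ->.
rewrite E (eqw_ctx _ _ (esym (reduce_reduce _))).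
apply: leq_trans (size_reduce _) _.
rewrite !size_cat !size_inv_word; ssrlia.
Qed.

Lemma conj_pw {T : eqType} (p x : word T) N :
  reduce (pw (inv_word p ++ x ++ p) N) = reduce (inv_word p ++ pw x N ++ p).
Proof.
elim: N => [|N IH]; first by rewrite /= cancel_l.
rewrite pwS (eqw_catr _ IH) conj_mul.
by rewrite (@eqw_ctx _ (inv_word p) _ (x ++ pw x N) p erefl) -pwS.
Qed.

Lemma conj_fix_comm {T : eqType} (p x : word T) :
  reduce (inv_word p ++ x ++ p) = reduce x -> comm p x.
Proof.
move=> H; rewrite /comm -(eqw_catr p H).
by have := @cancel_mid _ [::] p (x ++ p); rewrite /= => ->.
Qed.

Lemma len_arg (m j A K : nat) :
  2 * K < A -> m * A <= j * A + 2 * K -> j * A <= m * A + 2 * K -> j = m.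
Proof.
move=> /leP HA /leP H1 /leP H2; unfold addn, muln in *.
case: (Nat.lt_trichotomy j m) => [H|[H|H]] //; exfalso.
  have : ((j + 1) * A <= m * A)%coq_nat by apply: Nat.mul_le_mono_r; unfold addn; lia.
  unfold addn, muln; lia.
have : ((m + 1) * A <= j * A)%coq_nat by apply: Nat.mul_le_mono_r; unfold addn; lia.
unfold addn, muln; lia.
Qed.

Lemma Mcore {T : eqType} (c g : word T) :
  c != [::] -> red (c ++ c) -> comm c (inv_word g ++ c ++ g) -> comm g c.
Proof.
move=> Hc Hcc H.
set y := inv_word g ++ c ++ g.
have Hy : comm c (reduce y) := comm_eqr (esym (reduce_reduce y)) H.
have [z [m [j [Hm Ecz Hj]]]] := Kthm Hc Hcc (red_reduce y) Hy.
rewrite !reduce_reduce in Hj.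
have Hcr : red c := red_catl Hcc.
have Hzz : red (z ++ z).
  case: m Hm Ecz => // m _ Ecz.
  move: Hcc; rewrite {1}Ecz pwSr {1}Ecz pwS -!catA.
  by move/red_catr; rewrite catA => /red_catl.
have Hz : 0 < size z.
  case: (z) Ecz => [|? ?] // Ecz; by move: Hc; rewrite Ecz pw_nil.
have key : forall Z, red (Z ++ Z) -> size Z = size z -> reduce y = reduce (pw Z j) -> j = m.
  move=> Z HZZ HZs Hyj.
  set N := (size g).*2.+1.
  have E1 : reduce (inv_word g ++ pw c N ++ g) = pw Z (j * N).
    rewrite -conj_pw (pw_eq N Hyj) pw_mul reduce_red //; exact: red_pw.
  have L1 := LL (inv_word g) (pw c N) g.
  rewrite E1 (reduce_red (red_pw N Hcc)) in L1.
  have E3 : reduce (pw c N) = reduce (g ++ pw Z (j * N) ++ inv_word g).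
    have E1' : reduce (inv_word g ++ pw c N ++ g) = reduce (pw Z (j * N)).
      by rewrite E1 reduce_red // red_pw.
    by rewrite -(conj_red' g (pw c N)) (@eqw_ctx _ g _ _ (inv_word g) E1').
  have L2 := LL g (pw Z (j * N)) (inv_word g).
  rewrite -E3 (reduce_red (red_pw N Hcc)) (reduce_red (red_pw _ HZZ)) in L2.
  rewrite !size_pw !size_inv_word Ecz size_pw HZs in L1 L2.
  apply: (@len_arg m j (N * size z) (size g)).
  - rewrite /N -mul2n; apply: leq_trans (leq_pmulr _ Hz); by rewrite ltnS.
  - move/leP: L1 => L1; apply/leP; unfold addn, muln in *; nia.
  - move/leP: L2 => L2; apply/leP; unfold addn, muln in *; nia.
have contra : reduce y = reduce c -> reduce y = reduce (inv_word c) -> False.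
  move=> E1 E2; apply: (comm_not_inv Hc Hcc); by rewrite -E1 -E2.
case: Hj => Hj.
  have Hjm := key z Hzz erefl Hj; subst j.
  apply: conj_fix_comm; by rewrite -/y Hj -Ecz.
have HZZ' : red (inv_word z ++ inv_word z) by rewrite -inv_word_cat red_inv.
have Hjm := key (inv_word z) HZZ' (size_inv_word z) Hj; subst j.
have Hyc : reduce y = reduce (inv_word c) by rewrite Hj Ecz inv_pw.
have Hg2 : comm (g ++ g) c.
  apply: conj_fix_comm; rewrite inv_word_cat -!catA.
  have := @eqw_ctx _ (inv_word g) _ _ g Hyc; rewrite /y -!catA => ->.
  have := eqw_inv Hyc; rewrite /y !inv_word_cat inv_wordK -!catA => ->.
  by rewrite inv_wordK.
case: (eqVneq (reduce (g ++ g)) [::]) => Hg.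
  have Hg0 := torsion Hg.
  have Hig : reduce (inv_word g) = [::] by rewrite (eqw_inv (v := [::]) Hg0).
  apply: False_ind; apply: contra Hyc.
  rewrite /y reduce_catl Hig /= reduce_catr Hg0 cats0; by [].
have Hgg : comm (g ++ g) g by rewrite /comm catA.
have Hgc := CT Hg Hgg Hg2.
apply: False_ind; apply: contra Hyc.
rewrite /y (eqw_catr _ (esym Hgc)).
by have := @cancel_mid' _ [::] g c; rewrite /= => ->.
Qed.


Lemma Mfull {T : eqType} (x g : word T) :
  reduce x != [::] -> comm x (inv_word g ++ x ++ g) -> comm g x.
Proof.
move=> Hx H.
have [p [c [Ex Hc Hcc]]] := dec (red_reduce x) Hx.
have HCx : reduce (inv_word p ++ x ++ p) = reduce c.
  rewrite (eqw_ctx _ _ (esym (reduce_reduce x))) Ex.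
  exact: conj_red.
set g' := inv_word p ++ g ++ p.
have E : reduce (inv_word p ++ (inv_word g ++ x ++ g) ++ p) =
         reduce (inv_word g' ++ c ++ g').
  have Eig : inv_word g' = inv_word p ++ inv_word g ++ p.
    by rewrite /g' !inv_word_cat inv_wordK catA.
  rewrite Eig (@eqw_ctx _ (inv_word p ++ inv_word g ++ p) c (inv_word p ++ x ++ p) g' (esym HCx)).
  rewrite (eqw_catr (inv_word p ++ inv_word g ++ p) (conj_mul p x g)).
  by rewrite conj_mul.
have Hc' : comm c (inv_word g' ++ c ++ g').
  exact: (comm_eqr E (comm_eql HCx (comm_conj p H))).
have := Mcore Hc Hcc Hc'.
move/(comm_eqr (esym HCx)); exact: unconj_comm.
Qed.

Lemma subst_cat {S : Type} {T : eqType} (f : S -> word T) u v :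
  subst f (u ++ v) = subst f u ++ subst f v.
Proof. by rewrite /subst map_cat flatten_cat. Qed.

Lemma subst_cons {S : Type} {T : eqType} (f : S -> word T) l v :
  subst f (l :: v) = (if l.2 then inv_word (f l.1) else f l.1) ++ subst f v.
Proof. by []. Qed.

Lemma subst_inv {S : Type} {T : eqType} (f : S -> word T) w :
  subst f (inv_word w) = inv_word (subst f w).
Proof.
elim: w => // l w IH.
rewrite inv_word_cons subst_cat IH subst_cons inv_word_cat; congr (_ ++ _).
by case: l => a [] /=; rewrite /subst /= cats0 ?inv_wordK.
Qed.

Lemma subst_conj {S : Type} {T : eqType} (f : S -> word T) s r :
  subst f (conjw s r) = inv_word (f s) ++ subst f r ++ f s.
Proof. by rewrite /conjw subst_cons subst_cat /= /subst /= cats0. Qed.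

Lemma subst_commw {S : Type} {T : eqType} (f : S -> word T) u v :
  subst f (commw u v) =
  inv_word (subst f u) ++ inv_word (subst f v) ++ subst f u ++ subst f v.
Proof. by rewrite /commw !subst_cat !subst_inv. Qed.

Lemma comm_of_commw {T : eqType} (a b : word T) :
  reduce (inv_word a ++ inv_word b ++ a ++ b) = [::] -> comm a b.
Proof.
move=> H; rewrite /comm.
have := @eqw_catr _ (b ++ a) _ [::] H; rewrite cats0 => <-.
rewrite -catA.
have := @cancel_mid _ b a (inv_word b ++ a ++ b); move=> ->.
by have := @cancel_mid _ [::] b (a ++ b); rewrite /= => ->.
Qed.

Lemma killed_inv {T : eqType} (a : word T) : reduce a = [::] -> reduce (inv_word a) = [::].
Proof. by move=> H; rewrite (eqw_inv (v := [::]) H). Qed.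

Lemma killed_commw_l {T : eqType} (a b : word T) :
  reduce a = [::] -> reduce (inv_word a ++ inv_word b ++ a ++ b) = [::].
Proof.
move=> H; rewrite reduce_catl killed_inv //=.
rewrite reduce_catr (@reduce_catl _ a b) H /= -reduce_catr; exact: cancel_l.
Qed.

Lemma killed_commw_r {T : eqType} (a b : word T) :
  reduce b = [::] -> reduce (inv_word a ++ inv_word b ++ a ++ b) = [::].
Proof.
move=> H.
rewrite (@eqw_ctx _ (inv_word a) (inv_word b) [::] (a ++ b)) /=; last by rewrite killed_inv.
rewrite catA reduce_catr H cats0; exact: cancel_l.
Qed.

Lemma killed_conj {T : eqType} (h r : word T) :
  reduce r = [::] -> reduce (inv_word h ++ r ++ h) = [::].
Proof. by move=> H; rewrite (@eqw_ctx _ (inv_word h) r [::] h H) cancel_l. Qed.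

Lemma mem_commset {S : finType} (A B : seq (word S)) w :
  w \in commset A B -> exists u v, [/\ u \in conjS0 A, v \in B & w = commw u v].
Proof. by case/allpairsP => [[u v] [/= Hu Hv ->]]; exists u, v. Qed.

Lemma mem_conjS0 {S : finType} (R : seq (word S)) u :
  u \in conjS0 R -> u \in R \/ exists s r, r \in R /\ u = conjw s r.
Proof.
rewrite mem_cat => /orP[H|]; first by left.
by case/allpairsP => [[s r] [/= _ Hr ->]]; right; exists s, r.
Qed.

Lemma conjS0_self {S : finType} (R : seq (word S)) r : r \in R -> r \in conjS0 R.
Proof. by move=> H; rewrite mem_cat H. Qed.

Lemma conjS0_conj {S : finType} (R : seq (word S)) s r : r \in R -> conjw s r \in conjS0 R.
Proof.
move=> H; rewrite mem_cat; apply/orP; right.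
by apply/allpairsP; exists (s, r); rewrite mem_enum.
Qed.

Lemma RtildeS {S : finType} (R : nat -> seq (word S)) k :
  Rtilde R k.+2 = commset (R k.+2) (Rtilde R k.+1).
Proof. by []. Qed.

Lemma easy_dir {S : finType} {T : eqType} (R : nat -> seq (word S)) (f : S -> word T) k i :
  1 <= i <= k.+1 -> (forall w, w \in R i -> kills f w) ->
  forall w, w \in Rtilde R k.+1 -> kills f w.
Proof.
elim: k i => [|k IH] i Hi HR w Hw.
  have Hi1 : i = 1 by move: Hi; clear; case: i => [|[|]].
  by subst i; apply: HR.
rewrite RtildeS in Hw.
have [u [v [Hu Hv ->]]] := mem_commset Hw.
rewrite /kills subst_commw.
case: (eqVneq i k.+2) => Hik.
  subst i; apply: killed_commw_l.
  case: (mem_conjS0 Hu) => [Hu'|[s [r [Hr ->]]]]; first exact: HR.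
  rewrite subst_conj; apply: killed_conj; exact: HR.
apply: killed_commw_r; apply: (IH i) => //.
case/andP: Hi => H1 H2; rewrite H1 /=.
by rewrite -ltnS ltn_neqAle Hik H2.
Qed.

Lemma abelian_of {S : Type} {T : eqType} (f : S -> word T) :
  (forall s s', comm (f s) (f s')) -> forall u v, comm (subst f u) (subst f v).
Proof.
move=> H.
have H1 : forall s v, comm (f s) (subst f v).
  move=> s; elim => [|l v IH]; first exact: comm_nil.
  rewrite subst_cons; apply: comm_cat => //.
  case: (l.2); [exact: comm_inv | exact: H].
elim => [|l u IH] v; first exact/comm_sym/comm_nil.
rewrite subst_cons; apply/comm_sym/comm_cat; last exact/comm_sym.
case: (l.2); [apply: comm_inv|]; exact/comm_sym.
Qed.

Lemma hard_dir {S : finType} {T : eqType} (R : nat -> seq (word S)) (f : S -> word T) n :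
  nonabelian_image f ->
  (forall i, 1 <= i <= n -> exists w, w \in R i /\ ~ kills f w) ->
  forall k, k.+1 <= n -> exists w, w \in Rtilde R k.+1 /\ ~ kills f w.
Proof.
move=> Hnab Hex; elim => [|k IH] Hk.
  by apply: Hex.
have [v [Hv Hvk]] := IH (ltnW Hk).
have [r [Hr Hrk]] := Hex k.+2 Hk.
apply: NNPP => Hno.
have Hall : forall u, u \in conjS0 (R k.+2) -> comm (subst f u) (subst f v).
  move=> u Hu; apply: comm_of_commw; rewrite -subst_commw.
  apply: NNPP => Hn; apply: Hno; exists (commw u v); split => //.
  by rewrite RtildeS; apply/allpairsP; exists (u, v).
have Hh : reduce (subst f v) != [::] by apply/eqP.
have Hx : reduce (subst f r) != [::] by apply/eqP.
have Hxs : forall s, comm (f s) (subst f r).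
  move=> s; apply: Mfull => //.
  have H1 := Hall _ (conjS0_self Hr).
  have H2 := Hall _ (conjS0_conj s Hr); rewrite subst_conj in H2.
  exact: (CT Hh (comm_sym H1) (comm_sym H2)).
have Hab := abelian_of (fun s s' => CT Hx (comm_sym (Hxs s)) (comm_sym (Hxs s'))).
case: Hnab => u [w Huw]; apply: Huw.
by rewrite !subst_cat; apply: Hab.
Qed.

Unset Implicit Arguments.

Theorem mainTheorem10 (S : finType) (T : eqType) (n : nat) (R : nat -> seq (word S))
    (f : S -> word T) :
  2 <= n ->
  nonabelian_image f ->
  (forall w, w \in Rtilde R n -> kills f w) <->
  (exists i, 1 <= i <= n /\ forall w, w \in R i -> kills f w).
Proof.
move=> Hn Hnab.
have En : n = n.-1.+1 by case: n Hn.
split.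
  move=> H; apply: NNPP => Hno.
  have Hex : forall i, 1 <= i <= n -> exists w, w \in R i /\ ~ kills f w.
    move=> i Hi; apply: NNPP => Hn'; apply: Hno; exists i; split => //.
    move=> w Hw; apply: NNPP => Hk; apply: Hn'; by exists w.
  have Hk1 : n.-1.+1 <= n by rewrite -En.
  have [w [Hw Hwk]] := hard_dir Hnab Hex Hk1.
  by apply: Hwk; apply: H; rewrite En.
case=> i [Hi HR] w Hw.
rewrite En in Hi Hw.
exact: (easy_dir Hi HR).
Qed.
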